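(* Let $n\ge 2$ and let $G_n=H_0H_1\cdots H_{n-1}$ be a spiro hexagonal chain of length $n$ with cut-vertices $c_1,\dots,c_{n-1}$, and let $G_{n-1}=H_0H_1\cdots H_{n-2}$. Then $$W(G_n)=W(G_{n-1})+5\,W(G_{n-1},c_{n-1})+45n-18,$$ and for every vertex $c_n$ of $H_{n-1}$ other than $c_{n-1}$, $$W(G_n,c_n)=W(G_{n-1},c_{n-1})+f(c_n),$$ where $f(c_n)=5(n-1)+9$ if $c_n$ is an ortho-vertex of $H_{n-1}$, $f(c_n)=10(n-1)+9$ if $c_n$ is a meta-vertex of $H_{n-1}$, and $f(c_n)=15(n-1)+9$ if $c_n$ is the para-vertex of $H_{n-1}$. Moreover $W(G_1)=27$ and $W(G_1,c_1)=f(c_1)=9$ for any vertex $c_1$ of $H_0$.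
   Context: All graphs are simple and connected; $d(u,v)$ is the shortest-path distance. For a vertex $v$ of $G$, $W(G,v)=\sum_{u\in V(G)}d_G(u,v)$, and the Wiener index is $W(G)=\sum_{\{u,v\}\subseteq V(G)}d_G(u,v)$. A spiro hexagonal chain of length $n$, $G_n=H_0H_1\cdots H_{n-1}$, is a connected graph in which every block is a hexagon (6-cycle) $H_0,\dots,H_{n-1}$, each hexagon has at most two cut-vertices, each cut-vertex is shared by exactly two hexagons, and for $k=1,\dots,n-1$ the hexagons $H_{k-1}$ and $H_k$ share the cut-vertex $c_k$ (so $c_{k+1}\ne c_k$ are distinct vertices of $H_k$). For $k\ge1$, a vertex of $H_k$ at distance $1$, $2$, $3$ from $c_k$ is called an ortho-, meta-, para-vertex of $H_k$, denoted $o_k,m_k,p_k$ respectively (there are two ortho-, two meta- and one para-vertex). $G_1$ is a single hexagon $H_0$. *)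

(* Defs.v *)
From mathcomp Require Import all_boot.
Set Implicit Arguments. Unset Strict Implicit. Unset Printing Implicit Defensive.

(* Shortest-path distance: the least m such that there is a walk with m edges
   from u to v (a walk of m edges is u :: q with q an m-tuple forming an e-path).
   For connected graphs this is d(u,v). *)
Definition gdist (T : finType) (e : rel T) (u v : T) : nat :=
  find (fun m => [exists q : m.-tuple T, path e u q && (last u q == v)])
       (iota 0 #|T|).

Definition Wv (T : finType) (e : rel T) (v : T) : nat :=
  \sum_(u : T) gdist e u v.

Definition W (N : nat) (e : rel 'I_N) : nat :=
  \sum_(u < N) \sum_(v < N | u < v) gdist e u v.

(* Each hexagon H_k has local labels 0..5 (cyclic order).  For k >= 1,
   local vertex 0 of H_k is the cut-vertex c_k, which is the vertex of
   H_{k-1} with local label p k; the other local vertices 1..5 of H_k are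
   fresh.  [spiro_g p k i] is the global index of local vertex i of H_k. *)
Fixpoint spiro_g (p : nat -> nat) (k i : nat) : nat :=
  match k with
  | 0 => i
  | k'.+1 => if i == 0 then spiro_g p k' (p k) else 5 * k + i
  end.

Definition spiro (n : nat) (p : nat -> nat) : rel 'I_(5 * n).+1 :=
  fun u v => [exists k : 'I_n, exists i : 'I_6,
     ((val u == spiro_g p k i) && (val v == spiro_g p k (i.+1 %% 6)))
  || ((val v == spiro_g p k i) && (val u == spiro_g p k (i.+1 %% 6)))].

Definition spiro_v (n : nat) (p : nat -> nat) (k i : nat) : 'I_(5 * n).+1 :=
  inord (spiro_g p k i).

(* Validity of the positions for G_n: c_1 is some vertex (label < 6) of H_0;
   for 2 <= k < n, c_k is a vertex of H_{k-1} different from c_{k-1}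
   (label in 1..5). *)
Definition spiro_valid (n : nat) (p : nat -> nat) : Prop :=
  forall k, 0 < k < n -> p k < 6 /\ (1 < k -> 0 < p k).

(* distance inside a hexagon from local vertex 0 to local vertex i (i < 6):
   1 = ortho, 2 = meta, 3 = para *)
Definition hexdist (i : nat) : nat := minn i (6 - i).

Definition spiro_f (n i : nat) : nat :=
  match hexdist i with
  | 1 => 5 * (n - 1) + 9
  | 2 => 10 * (n - 1) + 9
  | _ => 15 * (n - 1) + 9
  end.

Arguments spiro : clear implicits.
Arguments spiro_v : clear implicits.

(* Main.v *)
Require Import Defs.
From mathcomp Require Import all_boot zify.
Set Implicit Arguments. Unset Strict Implicit.

Definition walkP (T : finType) (e : rel T) (u v : T) (m : nat) : bool :=
  [exists q : m.-tuple T, path e u q && (last u q == v)].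

Lemma gdistE (T : finType) (e : rel T) u v :
  gdist e u v = find (walkP e u v) (iota 0 #|T|).
Proof. by []. Qed.

Lemma find_iota_le (P : pred nat) N k : P k -> find P (iota 0 N) <= k.
Proof.
move=> Pk; case: (ltnP k N) => hk.
- rewrite leqNgt; apply/negP => /(before_find 0); rewrite nth_iota // add0n Pk. by [].
- by have := find_size P (iota 0 N); rewrite size_iota; lia.
Qed.

Lemma find_iota_eq (P : pred nat) N k :
  P k -> (forall j, j < k -> ~~ P j) -> k < N -> find P (iota 0 N) = k.
Proof.
move=> Pk Hj hk; apply/eqP; rewrite eqn_leq find_iota_le //=.
rewrite leqNgt; apply/negP => hlt.
have hs : has P (iota 0 N) by rewrite has_find size_iota; lia.
have := nth_find 0 hs; rewrite nth_iota; last lia.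
by rewrite add0n; apply/negP/Hj.
Qed.

Lemma walkP_seq (T : finType) (e : rel T) u v (q : seq T) :
  path e u q -> last u q = v -> walkP e u v (size q).
Proof. by move=> pq lq; apply/existsP; exists (in_tuple q); rewrite /= pq lq eqxx. Qed.

Lemma walkP_ex (T : finType) (e : rel T) u v m :
  walkP e u v m -> exists q : seq T, [/\ size q = m, path e u q & last u q = v].
Proof. by case/existsP => q /andP [pq /eqP lq]; exists (val q); rewrite size_tuple. Qed.

Definition good (T : finType) (e : rel T) := forall u v : T, walkP e u v (gdist e u v).

Lemma gd_refl (T : finType) (e : rel T) u : gdist e u u = 0.
Proof.
apply/eqP; rewrite -leqn0 gdistE; apply: find_iota_le.
exact: (@walkP_seq _ e u u [::]).
Qed.

Lemma gd_lip (T : finType) (e : rel T) : good e ->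
  forall x y v, e x y -> gdist e x v <= (gdist e y v).+1.
Proof.
move=> Hg x y v exy; have [q [sq pq lq]] := walkP_ex (Hg y v).
rewrite gdistE; apply: find_iota_le; rewrite -sq.
by apply: (@walkP_seq _ e x v (y :: q)) => //=; rewrite exy.
Qed.

Lemma gd_desc (T : finType) (e : rel T) : good e ->
  forall x v, x != v -> exists y, e x y /\ (gdist e y v).+1 = gdist e x v.
Proof.
move=> Hg x v xv; have [q [sq pq lq]] := walkP_ex (Hg x v).
case: q sq pq lq => [|y q] sq pq lq; first by rewrite /= in lq; rewrite lq eqxx in xv.
move: pq => /= /andP [exy pq]; exists y; split => //.
have h1 : gdist e y v <= size q by rewrite gdistE; apply: find_iota_le; exact: walkP_seq.
have h2 := gd_lip Hg v exy; rewrite /= in sq; lia.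
Qed.

Lemma gd_char (T : finType) (e : rel T) (v0 : T) (D : T -> nat) :
  D v0 = 0 -> (forall x y, e x y -> D x <= (D y).+1) ->
  (forall x, x != v0 -> exists y, e x y /\ (D y).+1 = D x) ->
  forall u, gdist e u v0 = D u /\ walkP e u v0 (D u).
Proof.
move=> H0 H1 H2.
have low : forall q u, path e u q -> last u q = v0 -> D u <= size q.
  elim=> [|y q IH] u /=; first by move=> _ ->; rewrite H0.
  case/andP=> euy pq lq; have := IH y pq lq; have := H1 _ _ euy; lia.
have cons : forall d u, D u = d -> exists q : seq T,
   [/\ size q = d, path e u q, last u q = v0, uniq (u :: q) & all (fun x => D x < D u) q].
  elim=> [|d IH] u Du.
  - have -> : u = v0.
      by case: (eqVneq u v0) => // /H2 [y [_ h]]; lia.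
    by exists [::].
  - have uv : u != v0 by apply/eqP => uv; rewrite uv H0 in Du.
    have [y [euy Dy]] := H2 _ uv.
    have [q [sq pq lq uq aq]] := IH y ltac:(lia).
    exists (y :: q); split => //=.
    + by rewrite sq.
    + by rewrite euy.
    + rewrite [_ && uniq q]uq andbT; apply/negP; rewrite inE => /orP [/eqP uy|uin].
        by rewrite -uy in Dy; lia.
      by move/allP: aq => /(_ _ uin); lia.
    + apply/andP; split; first lia.
      apply/allP => z zin; move/allP: aq => /(_ _ zin); lia.
move=> u; have [q [sq pq lq uq _]] := cons (D u) u erefl.
have W : walkP e u v0 (D u) by rewrite -sq; exact: walkP_seq.
split => //; rewrite gdistE; apply: find_iota_eq => //.
- move=> j hj; apply/negP => /walkP_ex [q2 [sq2 pq2 lq2]].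
  by have := low _ _ pq2 lq2; lia.
- have := max_card (mem (u :: q)); rewrite (card_uniqP uq) /= sq; lia.
Qed.

Definition Enat (p : nat -> nat) n a b := [exists k : 'I_n, exists i : 'I_6,
  ((a == spiro_g p k i) && (b == spiro_g p k (i.+1 %% 6)))
  || ((b == spiro_g p k i) && (a == spiro_g p k (i.+1 %% 6)))].

Lemma spiroE n p (u v : 'I_(5 * n).+1) : spiro n p u v = Enat p n u v.
Proof. by []. Qed.

Definition Hx (p : nat -> nat) m a b := [exists i : 'I_6,
  ((a == spiro_g p m i) && (b == spiro_g p m (i.+1 %% 6)))
  || ((b == spiro_g p m i) && (a == spiro_g p m (i.+1 %% 6)))].

Lemma Enat_S p m a b : Enat p m.+1 a b = Enat p m a b || Hx p m a b.
Proof.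
apply/idP/orP.
- case/existsP => k /existsP [i h]; case: (ltnP k m) => hk.
    by left; apply/existsP; exists (Ordinal hk); apply/existsP; exists i.
  have km : nat_of_ord k = m by have := ltn_ord k; lia.
  by right; apply/existsP; exists i; rewrite -km.
- case=> [/existsP [k /existsP [i h]] | /existsP [i h]].
    by apply/existsP; exists (widen_ord (leqnSn m) k); apply/existsP; exists i.
  by apply/existsP; exists ord_max; apply/existsP; exists i.
Qed.

Lemma g_new p k i : 0 < i -> spiro_g p k i = 5 * k + i.
Proof. by case: k => [|k] /=; [lia | case: i]. Qed.

Definition valid (p : nat -> nat) m := forall k, 0 < k <= m -> p k < 6.

Lemma g_le p m : valid p m -> forall k i, k <= m -> i < 6 -> spiro_g p k i <= 5 * k + i.
Proof.
move=> Hv; elim=> [|k IH] i hk hi /=; first lia.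
case: i hi => [|i] hi /=; last lia.
have h6 := Hv k.+1 ltac:(lia).
have := IH (p k.+1) (ltnW hk) h6; lia.
Qed.

Lemma Enat_old p m a b : valid p m -> Enat p m a b -> a <= 5 * m /\ b <= 5 * m.
Proof.
move=> Hv /existsP [k /existsP [i h]].
have hk := ltn_ord k; have hi := ltn_ord i.
have h1 := g_le Hv (ltnW hk) hi.
have h2 := g_le Hv (ltnW hk) (ltn_pmod i.+1 (isT : 0 < 6)).
have h3 : (i.+1 %% 6) < 6 by rewrite ltn_pmod.
case/orP: h => /andP [/eqP -> /eqP ->]; lia.
Qed.

Definition cd j k := hexdist ((j + 6 - k) %% 6).

Definition nb i j := if cd (i.+1 %% 6) j < cd i j then i.+1 %% 6 else (i + 5) %% 6.

Lemma cd_lip i j : i < 6 -> j < 6 ->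
  (cd i j <= (cd (i.+1 %% 6) j).+1) && (cd (i.+1 %% 6) j <= (cd i j).+1).
Proof.
by case: i => [|[|[|[|[|[|i]]]]]] //; case: j => [|[|[|[|[|[|j]]]]]].
Qed.

Lemma cd_desc i j : i < 6 -> j < 6 -> i != j ->
  [&& nb i j < 6, (nb i j == i.+1 %% 6) || (i == (nb i j).+1 %% 6) &
      (cd (nb i j) j).+1 == cd i j].
Proof.
by case: i => [|[|[|[|[|[|i]]]]]] //; case: j => [|[|[|[|[|[|j]]]]]].
Qed.

Lemma cd_refl j : cd j j = 0.
Proof. by rewrite /cd addKn modnn. Qed.

Definition dd p m a b := gdist (spiro m p) (inord a) (inord b).

Definition Dn p m b a :=
  if b <= 5 * m then
    (if a <= 5 * m then dd p m a b else dd p m (spiro_g p m 0) b + cd (a - 5 * m) 0)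
  else
    (if a <= 5 * m then dd p m a (spiro_g p m 0) + cd 0 (b - 5 * m)
     else cd (a - 5 * m) (b - 5 * m)).

Definition Dh p m b := if b <= 5 * m then dd p m (spiro_g p m 0) b else 0.
Definition jb m b := if b <= 5 * m then 0 else b - 5 * m.

Lemma dd_refl p m a : dd p m a a = 0.
Proof. exact: gd_refl. Qed.

Lemma Dn_hv p m b i : valid p m -> i < 6 ->
  Dn p m b (spiro_g p m i) = Dh p m b + cd i (jb m b).
Proof.
move=> Hv hi; rewrite /Dn /Dh /jb.
case: i hi => [|i] hi.
- have hc := g_le Hv (leqnn m) (isT : 0 < 6); rewrite addn0 in hc; rewrite hc.
  by case: ifP => _; rewrite ?dd_refl ?addn0.
- rewrite g_new // (_ : 5 * m + i.+1 <= 5 * m = false); last lia.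
  by rewrite addKn; case: ifP.
Qed.

Lemma step p m : valid p m -> good (spiro m p) ->
  forall (v u : 'I_(5 * m.+1).+1),
    gdist (spiro m.+1 p) u v = Dn p m v u /\ walkP (spiro m.+1 p) u v (Dn p m v u).
Proof.
move=> Hv Hg v; apply: gd_char.
- rewrite /Dn; case: ifP => hv; first by rewrite hv dd_refl.
  by rewrite hv cd_refl.
- move=> x y; rewrite spiroE Enat_S => /orP [hE | hH].
  + have [hx hy] := Enat_old Hv hE.
    have he : spiro m p (inord x) (inord y).
      by rewrite spiroE !inordK //; lia.
    rewrite /Dn hx hy; case: ifP => _.
    * exact: (gd_lip Hg (inord v) he).
    * have := gd_lip Hg (inord (spiro_g p m 0)) he; rewrite /dd; lia.
  + have hj : jb m v < 6.
      by rewrite /jb; case: ifP => // _; have := ltn_ord v; lia.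
    case/existsP: hH => i /orP [] /andP [/eqP -> /eqP ->];
    have hi := ltn_ord i; (have h6 : i.+1 %% 6 < 6 by rewrite ltn_pmod);
    rewrite !Dn_hv //; have /andP [h1 h2] := cd_lip hi hj; lia.
- move=> x xv.
  have hvb : (v : nat) <= 5 * m + 5 by have := ltn_ord v; lia.
  have hxb : (x : nat) <= 5 * m + 5 by have := ltn_ord x; lia.
  have hc : spiro_g p m 0 <= 5 * m by have := g_le Hv (leqnn m) (isT : 0 < 6); lia.
  have xv' : (x : nat) != v by [].
  case: (boolP ((x <= 5 * m) && ((v <= 5 * m) || (spiro_g p m 0 != x)))) => [/andP [hx ht] | hn].
  + pose t := if v <= 5 * m then (v : nat) else spiro_g p m 0.
    have ht5 : t <= 5 * m by rewrite /t; case: ifP.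
    have hxt : (inord x : 'I_(5*m).+1) != inord t.
      apply/negP => /eqP /(congr1 (@nat_of_ord _)); rewrite !inordK; try lia.
      rewrite /t; case: ifP => hv e; first by rewrite e eqxx in xv'.
      by rewrite hv /= e eqxx in ht.
    have [y' [ey dy]] := gd_desc Hg hxt.
    have hy' : (y' : nat) <= 5 * m by have := ltn_ord y'; lia.
    exists (inord y'); split.
    * rewrite spiroE Enat_S inordK; last lia.
      rewrite spiroE inordK in ey; last lia.
      by rewrite ey.
    * rewrite /Dn inordK; last lia.
      rewrite hx hy' /dd (inord_val y'); rewrite /t in dy.
      by case: ifP => hv; rewrite hv in dy; [rewrite dy | rewrite -dy addSn].
  + clear xv.
    pose j := if x <= 5 * m then 0 else x - 5 * m.
    have hxj : (x : nat) = spiro_g p m j.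
      rewrite /j; case: ifP => hx.
        by move: hn; rewrite hx /= negb_or negbK => /andP [_ /eqP].
      rewrite g_new; lia.
    have hj6 : j < 6 by rewrite /j; case: ifP => _; lia.
    have hjb : jb m v < 6 by rewrite /jb; case: ifP => _; lia.
    have hjj : j != jb m v.
      move/eqP: xv' => xv'.
      rewrite /j /jb; case: ifP => hx; case: ifP => hv'; apply/eqP; try lia.
    have /and3P [hk hadj /eqP hd] := cd_desc hj6 hjb hjj.
    move: (nb j (jb m v)) hk hadj hd => k hk hadj hd.
    have hkb := g_le Hv (leqnn m) hk.
    exists (inord (spiro_g p m k)); split.
    * rewrite spiroE Enat_S inordK; last lia.
      apply/orP; right; apply/existsP; rewrite hxj.
      case/orP: hadj => /eqP hk'.
        by exists (Ordinal hj6); rewrite /= hk' !eqxx.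
      by exists (Ordinal hk); rewrite /= -hk' !eqxx orbT.
    * rewrite inordK; last lia.
      rewrite Dn_hv // hxj Dn_hv //; lia.
Qed.

Lemma good_all p m : valid p m -> good (spiro m p).
Proof.
elim: m => [|m IH] Hv.
- move=> u v; have -> : u = v by apply: ord_inj; have := ltn_ord u; have := ltn_ord v; lia.
  by rewrite gd_refl; apply: (@walkP_seq _ _ v v [::]).
- have Hv' : valid p m by move=> k hk; apply: Hv; lia.
  move=> u v; have [-> W] := step Hv' (IH Hv') v u; exact: W.
Qed.

Lemma sum_iota n (F : nat -> nat) : \sum_(u < n) F u = \sum_(a <- iota 0 n) F a.
Proof. by rewrite -(big_mkord xpredT) /index_iota subn0. Qed.

Lemma W_iota n (F : nat -> nat -> nat) :
  \sum_(u < n) \sum_(v < n | u < v) F u v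
  = \sum_(a <- iota 0 n) \sum_(b <- iota 0 n | a < b) F a b.
Proof.
rewrite -(big_mkord xpredT (fun a => \sum_(v < n | a < v) F a v)) /index_iota subn0.
by apply: eq_bigr => a _; rewrite -(big_mkord (fun v => a < v) (F a)) /index_iota subn0.
Qed.

Lemma iota_split m : iota 0 (5 * m.+1).+1 = iota 0 (5 * m).+1 ++ map (addn (5 * m)) (iota 1 5).
Proof.
have -> : (5 * m.+1).+1 = (5 * m).+1 + 5 by lia.
by rewrite iotaD add0n -iotaDl addn1.
Qed.

Lemma sum_const_iota n c : \sum_(a <- iota 0 n) c = c * n.
Proof. by rewrite big_const_seq count_predT size_iota iter_addn_0. Qed.

Lemma Dn_on p m a i : a <= 5 * m -> 0 < i ->
  Dn p m (5 * m + i) a = dd p m a (spiro_g p m 0) + cd 0 i.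
Proof.
move=> ha hi; rewrite /Dn ha (_ : 5 * m + i <= 5 * m = false); last lia.
by rewrite addKn.
Qed.

Lemma Dn_nn p m i j : 0 < i -> 0 < j -> Dn p m (5 * m + j) (5 * m + i) = cd i j.
Proof.
move=> hi hj; rewrite /Dn (_ : 5 * m + i <= 5 * m = false); last lia.
by rewrite (_ : 5 * m + j <= 5 * m = false) ?addKn //; lia.
Qed.

Lemma Dn_oo p m a b : a <= 5 * m -> b <= 5 * m -> Dn p m b a = dd p m a b.
Proof. by move=> ha hb; rewrite /Dn ha hb. Qed.

Lemma Wv_dd p m b : Wv (spiro m p) (inord b) = \sum_(a <- iota 0 (5 * m).+1) dd p m a b.
Proof.
rewrite /Wv -sum_iota; apply: eq_bigr => u _; by rewrite /dd inord_val.
Qed.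

Lemma W_dd p m : W (spiro m p) =
  \sum_(a <- iota 0 (5 * m).+1) \sum_(b <- iota 0 (5 * m).+1 | a < b) dd p m a b.
Proof.
rewrite /W -W_iota; apply: eq_bigr => u _; apply: eq_bigr => v _.
by rewrite /dd !inord_val.
Qed.

Lemma sum5 (F : nat -> nat) : \sum_(j <- iota 1 5) F j = F 1 + F 2 + F 3 + F 4 + F 5.
Proof. rewrite (_ : iota 1 5 = [:: 1; 2; 3; 4; 5]) // !big_cons big_nil; lia. Qed.

Lemma cdsum j : 0 < j <= 5 -> cd 1 j + cd 2 j + cd 3 j + cd 4 j + cd 5 j + cd 0 j = 9.
Proof. by case: j => [|[|[|[|[|[|j]]]]]]. Qed.

Lemma cd0sum : cd 0 1 + cd 0 2 + cd 0 3 + cd 0 4 + cd 0 5 = 9.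
Proof. by []. Qed.
Lemma cdsum0 : cd 1 0 + cd 2 0 + cd 3 0 + cd 4 0 + cd 5 0 = 9.
Proof. by []. Qed.

Lemma Wv_new p m j : valid p m -> good (spiro m p) -> 0 < j <= 5 ->
  Wv (spiro m.+1 p) (inord (5 * m + j))
  = Wv (spiro m p) (inord (spiro_g p m 0)) + 5 * m * cd 0 j + 9.
Proof.
move=> Hv Hg /andP [hj1 hj5].
have E : forall u : 'I_(5 * m.+1).+1,
    gdist (spiro m.+1 p) u (inord (5 * m + j)) = Dn p m (5 * m + j) u.
  by move=> u; rewrite (step Hv Hg _ u).1 inordK //; lia.
rewrite /Wv (eq_bigr _ (fun u _ => E u)) (sum_iota _ (Dn p m (5 * m + j))).
rewrite iota_split big_cat big_map -/(Wv _ _) Wv_dd.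
have -> : \sum_(a <- iota 0 (5 * m).+1) Dn p m (5 * m + j) a =
          \sum_(a <- iota 0 (5 * m).+1) (dd p m a (spiro_g p m 0) + cd 0 j).
  rewrite big_seq [RHS]big_seq; apply: eq_bigr => a; rewrite mem_iota => /andP [_ ha].
  by rewrite Dn_on //; lia.
rewrite big_split sum_const_iota sum5 !Dn_nn //.
have := @cdsum j ltac:(lia); clear E; rewrite /=; nia.
Qed.

Lemma sum_mul5 (s : seq nat) (f : nat -> nat) :
  \sum_(a <- s) (5 * f a) = 5 * \sum_(a <- s) f a.
Proof. elim: s => [|x s IH]; rewrite ?big_nil ?big_cons //; rewrite IH; lia. Qed.

Lemma W_step p m : valid p m -> good (spiro m p) ->
  W (spiro m.+1 p) = W (spiro m p) + 5 * Wv (spiro m p) (inord (spiro_g p m 0)) + (45 * m.+1 - 18).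
Proof.
move=> Hv Hg.
have E : forall u v : 'I_(5 * m.+1).+1, gdist (spiro m.+1 p) u v = Dn p m v u.
  by move=> u v; rewrite (step Hv Hg v u).1.
rewrite [LHS]/W (eq_bigr _ (fun u _ => eq_bigr _ (fun v _ => E u v))).
rewrite (W_iota _ (fun a b => Dn p m b a)) iota_split big_cat big_map.
set L := iota 0 (5 * m).+1.
have HL : \sum_(a <- L) \sum_(b <- L ++ [seq 5 * m + i | i <- iota 1 5] | a < b) Dn p m b a
   = W (spiro m p) + \sum_(a <- L) (5 * dd p m a (spiro_g p m 0) + 9).
  rewrite W_dd -big_split big_seq [RHS]big_seq; apply: eq_bigr => a.
  rewrite mem_iota => /andP [_ ha]; rewrite big_cat; congr (_ + _).
  - rewrite big_seq_cond [RHS]big_seq_cond; apply: eq_bigr => b /andP [hb _].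
    move: hb; rewrite mem_iota => /andP [_ hb]; rewrite Dn_oo //; lia.
  - rewrite big_map.
    have -> : \sum_(i <- iota 1 5 | a < 5 * m + i) Dn p m (5 * m + i) a
            = \sum_(i <- iota 1 5) (dd p m a (spiro_g p m 0) + cd 0 i).
      rewrite big_seq_cond [RHS]big_seq; apply: eq_big => [i | i].
        by rewrite mem_iota; apply/idP/idP => /andP [h1 h2] //; apply/andP; split => //; lia.
      by rewrite mem_iota => /andP [/andP [h1 h2] _]; rewrite Dn_on //; lia.
    rewrite sum5; have := cd0sum; lia.
have HN : \sum_(j <- iota 1 5) \sum_(b <- L ++ [seq 5 * m + i | i <- iota 1 5] | 5 * m + j < b)
            Dn p m b (5 * m + j) = 18.
  rewrite (_ : 18 = \sum_(j <- iota 1 5) \sum_(k <- iota 1 5 | j < k) cd j k); last first.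
    by rewrite unlock.
  rewrite big_seq [RHS]big_seq; apply: eq_bigr => j; rewrite mem_iota => /andP [hj1 hj5].
  rewrite big_cat big_map (@big1_seq _ _ _ _ L) /=; last first.
    by move=> b /andP [hlt]; rewrite mem_iota; lia.
  apply: eq_big => [k | k hk]; first by rewrite /= ltn_add2l.
  rewrite Dn_nn //; move: hk => /=; lia.
rewrite HL HN Wv_dd big_split sum_const_iota sum_mul5 /L.
move: (W _) (\sum_(a <- _) _) => A B /=; lia.
Qed.

Lemma Dn_no p m b i : b <= 5 * m -> 0 < i ->
  Dn p m b (5 * m + i) = dd p m (spiro_g p m 0) b + cd i 0.
Proof.
move=> hb hi; rewrite /Dn hb (_ : 5 * m + i <= 5 * m = false); last lia.
by rewrite addKn.
Qed.

Lemma Wv_old p m b : valid p m -> good (spiro m p) -> b <= 5 * m ->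
  Wv (spiro m.+1 p) (inord b)
  = Wv (spiro m p) (inord b) + 5 * dd p m (spiro_g p m 0) b + 9.
Proof.
move=> Hv Hg hb.
have E : forall u : 'I_(5 * m.+1).+1,
    gdist (spiro m.+1 p) u (inord b) = Dn p m b u.
  by move=> u; rewrite (step Hv Hg _ u).1 inordK //; lia.
rewrite /Wv (eq_bigr _ (fun u _ => E u)) (sum_iota _ (Dn p m b)).
rewrite iota_split big_cat big_map -/(Wv _ _) Wv_dd.
have -> : \sum_(a <- iota 0 (5 * m).+1) Dn p m b a =
          \sum_(a <- iota 0 (5 * m).+1) dd p m a b.
  rewrite big_seq [RHS]big_seq; apply: eq_bigr => a; rewrite mem_iota => /andP [_ ha].
  by rewrite Dn_oo //; lia.
rewrite sum5 !Dn_no //; have := cdsum0; move: (\sum_(a <- _) _) => S /=; lia.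
Qed.

Lemma W0 p (b : 'I_(5 * 0).+1) : Wv (spiro 0 p) b = 0.
Proof.
rewrite -(inord_val b) Wv_dd (_ : iota 0 (5 * 0).+1 = [:: 0]) // big_cons big_nil addn0.
have hb : (b : nat) = 0 by have := ltn_ord b; lia.
by rewrite hb dd_refl.
Qed.

Lemma WW0 p : W (spiro 0 p) = 0.
Proof.
by rewrite W_dd (_ : iota 0 (5 * 0).+1 = [:: 0]) // !big_cons !big_nil.
Qed.

Lemma f_cd m i : 0 < i < 6 -> spiro_f m.+1 i = 5 * m * cd 0 i + 9.
Proof.
case: i => [|[|[|[|[|[|i]]]]]] //= _; rewrite /spiro_f.
- rewrite (_ : hexdist 1 = 1) // (_ : cd 0 1 = 1) //; lia.
- rewrite (_ : hexdist 2 = 2) // (_ : cd 0 2 = 2) //; lia.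
- rewrite (_ : hexdist 3 = 3) // (_ : cd 0 3 = 3) //; lia.
- rewrite (_ : hexdist 4 = 2) // (_ : cd 0 4 = 2) //; lia.
- rewrite (_ : hexdist 5 = 1) // (_ : cd 0 5 = 1) //; lia.
Qed.

Theorem theorem2p1 :
  (forall (p : nat -> nat),
      W (spiro 1 p) = 27 /\ (forall c : 'I_(5 * 1).+1, Wv (spiro 1 p) c = 9))
  /\
  (forall (n : nat) (p : nat -> nat), 2 <= n -> spiro_valid n p ->
     W (spiro n p)
       = W (spiro (n - 1) p)
         + 5 * Wv (spiro (n - 1) p) (spiro_v (n - 1) p (n - 1) 0)
         + (45 * n - 18)
     /\ (forall i : nat, 0 < i < 6 ->
           Wv (spiro n p) (spiro_v n p (n - 1) i)
             = Wv (spiro (n - 1) p) (spiro_v (n - 1) p (n - 1) 0)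
               + spiro_f n i)).
Proof.
split.
- move=> p; have Hv0 : valid p 0 by move=> k; lia.
  have Hg0 := good_all Hv0.
  split; first by rewrite (W_step Hv0 Hg0) WW0 W0.
  move=> c; case: (posnP c) => hc.
  + rewrite -(inord_val c) hc (Wv_old Hv0 Hg0 (leq0n _)) W0 /= dd_refl.
    by [].
  + have hc5 : (c : nat) <= 5 by have := ltn_ord c; lia.
    have := Wv_new Hv0 Hg0 (j := c) ltac:(lia).
    by rewrite W0 muln0 add0n inord_val.
- move=> [|m] p hn Hval; first by [].
  have Hv : valid p m by move=> k hk; have := Hval k ltac:(lia); case.
  have Hg := good_all Hv.
  rewrite subSS subn0 /spiro_v; split; first exact: W_step Hv Hg.
  move=> i /andP [hi0 hi6]; rewrite g_new // (Wv_new Hv Hg (j := i)); last lia.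
  by rewrite f_cd ?addnA // hi0 hi6.
Qed.
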